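(* The automorphism group $\Gamma(S)$ of the separation relation $S$ on $\mathbb Q\times\mathbb Z$ consists exactly of \begin{itemize} \item all positive permutations of $\mathbb Q\times\mathbb Z$ that initiate a permutation $h$ of $\mathbb Q$ of rotation type, and \item all negative permutations of $\mathbb Q\times\mathbb Z$ that initiate a permutation $h$ of $\mathbb Q$ of reflection type. \end{itemize}
   Context: $\mathbb Q\times\mathbb Z$ denotes the set $\mathbb Q\times\mathbb Z$ with the lexicographic order: $(r,z)<(r',z')$ iff $r<r'$, or $r=r'$ and $z<z'$. Relations defined by order formulas are interpreted on $\mathbb Q\times\mathbb Z$ by the same formulas: $B(a,b,c)\iff(a<b<c)\vee(a>b>c)$ and $S(a,b,c,d)\iff(B(a,b,c)\vee B(a,d,c))\wedge(B(b,a,d)\vee B(b,c,d))$; $\Gamma(R)$ is the group of permutations of $\mathbb Q\times\mathbb Z$ preserving $R$. A vertical is a set $\{r\}\times\mathbb Z$. A permutation $g$ is systemic if it maps every vertical onto a vertical; it initiates the permutation $h$ of $\mathbb Q$ with $g(\{a\}\times\mathbb Z)=\{h(a)\}\times\mathbb Z$. A systemic permutation is positive if it preserves the order on each vertical and negative if it reverses the order on each vertical. A section of $\mathbb Q$ is a pair $\{I_1,I_2\}$ with $I_1\cup I_2=\mathbb Q$, $I_1\cap I_2=\emptyset$, and $a<b$ for all $a\in I_1,b\in I_2$ (one of them may be empty). A permutation $h$ of $\mathbb Q$ is of rotation type if for some section $\{I_1,I_2\}$, $h$ is increasing on $I_1$ and on $I_2$ and $h(a)>h(b)$ for all $a\in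 I_1$, $b\in I_2$; it is of reflection type if for some section $\{I_1,I_2\}$, $h$ is decreasing on $I_1$ and on $I_2$ and $h(a)<h(b)$ for all $a\in I_1$, $b\in I_2$. (The automorphism group of $\langle\mathbb Q,S\rangle$ is the set of permutations of $\mathbb Q$ of rotation or reflection type.) *)

(* Defs.v *)
From mathcomp Require Import all_boot all_order all_algebra.
Set Implicit Arguments. Unset Strict Implicit. Unset Printing Implicit Defensive.
Import Order.TTheory GRing.Theory Num.Theory.
Local Open Scope ring_scope.

Definition QZ := (rat * int)%type.

Definition qz_lt (p q : QZ) : Prop :=
  p.1 < q.1 \/ (p.1 = q.1 /\ p.2 < q.2).

Definition Bqz (a b c : QZ) : Prop :=
  (qz_lt a b /\ qz_lt b c) \/ (qz_lt b a /\ qz_lt c b).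

Definition Sqz (a b c d : QZ) : Prop :=
  (Bqz a b c \/ Bqz a d c) /\ (Bqz b a d \/ Bqz b c d).

Definition preserves4 (R : QZ -> QZ -> QZ -> QZ -> Prop) (g : QZ -> QZ) : Prop :=
  forall a b c d, R a b c d <-> R (g a) (g b) (g c) (g d).

(* g is systemic and initiates h: g maps each vertical {r} x Z onto {h r} x Z *)
Definition initiates (g : QZ -> QZ) (h : rat -> rat) : Prop :=
  forall r : rat,
    (forall z : int, (g (r, z)).1 = h r) /\
    (forall z' : int, exists z : int, g (r, z) = (h r, z')).

Definition positive_on_verticals (g : QZ -> QZ) : Prop :=
  forall (r : rat) (z z' : int), z < z' -> (g (r, z)).2 < (g (r, z')).2.

Definition negative_on_verticals (g : QZ -> QZ) : Prop :=
  forall (r : rat) (z z' : int), z < z' -> (g (r, z')).2 < (g (r, z)).2.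

(* A section {I1, I2} of Q: I1 is the lower part (downward closed),
   I2 its complement; either may be empty. *)
Definition lower_cut (I1 : rat -> Prop) : Prop :=
  forall a b : rat, I1 b -> a < b -> I1 a.

Definition rotation_type (h : rat -> rat) : Prop :=
  bijective h /\
  exists I1 : rat -> Prop, lower_cut I1 /\
    (forall a b, I1 a -> I1 b -> a < b -> h a < h b) /\
    (forall a b, ~ I1 a -> ~ I1 b -> a < b -> h a < h b) /\
    (forall a b, I1 a -> ~ I1 b -> h b < h a).

Definition reflection_type (h : rat -> rat) : Prop :=
  bijective h /\
  exists I1 : rat -> Prop, lower_cut I1 /\
    (forall a b, I1 a -> I1 b -> a < b -> h b < h a) /\
    (forall a b, ~ I1 a -> ~ I1 b -> a < b -> h b < h a) /\
    (forall a b, I1 a -> ~ I1 b -> h a < h b).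

(* Main.v *)
Require Import Defs.
From mathcomp Require Import all_boot all_order all_algebra.
From mathcomp Require Import zify.
From Stdlib Require Import ClassicalEpsilon FunctionalExtensionality.
Set Implicit Arguments. Unset Strict Implicit. Unset Printing Implicit Defensive.

Section Gen.
Variable T : Type.
Definition Bb (R : rel T) a b c := (R a b && R b c) || (R b a && R c b).
Definition Sb (R : rel T) a b c d := (Bb R a b c || Bb R a d c) && (Bb R b a d || Bb R b c d).
Definition Cb (R : rel T) a b c := [|| R a b && R b c, R b c && R c a | R c a && R a b].
Definition crot (D : T -> bool) (R : rel T) : rel T :=
  fun x y => (~~ D x && D y) || ((D x == D y) && R x y).
End Gen.

Definition rk (s : seq nat) : rel nat := fun i j => nth 0 s i < nth 0 s j.
Definition allN n (P : pred nat) := all P (iota 0 n).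
Definition tup4 {A} (l : seq A) (F : seq A -> bool) :=
  all (fun a => all (fun b => all (fun c => all (fun e => F [:: a;b;c;e]) l) l) l) l.
Definition tup3 {A} (l : seq A) (F : seq A -> bool) :=
  all (fun a => all (fun b => all (fun c => F [:: a;b;c]) l) l) l.

Lemma tup4P {A : eqType} (l : seq A) F : tup4 l F ->
  forall a b c e, a \in l -> b \in l -> c \in l -> e \in l -> F [:: a;b;c;e].
Proof.
move=> H a b c e Ha Hb Hc He.
by move/allP/(_ a Ha)/allP/(_ b Hb)/allP/(_ c Hc)/allP/(_ e He): H.
Qed.

Lemma tup3P {A : eqType} (l : seq A) F : tup3 l F ->
  forall a b c, a \in l -> b \in l -> c \in l -> F [:: a;b;c].
Proof.
move=> H a b c Ha Hb Hc.
by move/allP/(_ a Ha)/allP/(_ b Hb)/allP/(_ c Hc): H.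
Qed.

Lemma allNP n (P : pred nat) : (forall i, i < n -> P i) -> allN n P.
Proof. by move=> H; apply/allP => i; rewrite mem_iota => /andP[_ Hi]; apply: H. Qed.
Lemma allNE n (P : pred nat) : allN n P -> forall i, i < n -> P i.
Proof. by move=> /allP H i Hi; apply: H; rewrite mem_iota. Qed.

(* rotation invariance *)
Definition hypR s d := allN 4 (fun i => allN 4 (fun j =>
  (if rk s i j && nth false d j then nth false d i else true) &&
  (if nth 0 s i == nth 0 s j then nth false d i == nth false d j else true))).
Definition conclR s d := Sb (crot (nth false d) (rk s)) 0 1 2 3 == Sb (rk s) 0 1 2 3.
Definition checkR := tup4 (iota 0 4) (fun s => tup4 [::true;false]
  (fun d => if hypR s d then conclR s d else true)).
Lemma checkR_ok : checkR. Proof. by vm_compute. Qed.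

(* orientation consistency on 4 distinct points *)
Definition agree (R1 R2 : rel nat) i j k := Cb R1 i j k == Cb R2 i j k.
Definition hyp1 s1 s2 := allN 4 (fun i => allN 4 (fun j => allN 4 (fun k => allN 4
  (fun l => Sb (rk s1) i j k l == Sb (rk s2) i j k l)))).
Definition concl1 s1 s2 := agree (rk s1) (rk s2) 1 2 3 == agree (rk s1) (rk s2) 0 1 2.
Definition check1 := tup4 (iota 0 4) (fun s1 => if uniq s1 then tup4 (iota 0 4)
  (fun s2 => if uniq s2 then (if hyp1 s1 s2 then concl1 s1 s2 else true) else true) else true).
Lemma check1_ok : check1. Proof. by vm_compute. Qed.

Definition hyp3 s1 s2 := allN 3 (fun i => allN 3 (fun j => allN 3
  (fun k => Cb (rk s1) i j k == Cb (rk s2) i j k))).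
Definition concl3 s1 s2 :=
  (if [&& rk s1 0 1, rk s1 1 2 & rk s2 2 1] then rk s2 2 0 && rk s2 0 1 else true) &&
  ~~ [&& rk s1 0 1, rk s1 1 2, rk s2 1 0 & rk s2 0 2].
Definition check3 := tup3 (iota 0 3) (fun s1 => if uniq s1 then tup3 (iota 0 3)
  (fun s2 => if uniq s2 then (if hyp3 s1 s2 then concl3 s1 s2 else true) else true) else true).
Lemma check3_ok : check3. Proof. by vm_compute. Qed.

Definition concl0 s := Cb (fun i j => rk s j i) 0 1 2 == ~~ Cb (rk s) 0 1 2.
Definition check0 := tup3 (iota 0 3) (fun s => if uniq s then concl0 s else true).
Lemma check0_ok : check0. Proof. by vm_compute. Qed.

Definition sto (T : eqType) (R : rel T) :=
  [/\ forall x, R x x = false, forall x y z, R x y -> R y z -> R x z &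
      forall x y, x != y -> R x y || R y x].

Lemma memt (x y : nat) s : y \in s -> y \in x :: s.
Proof. by move=> H; rewrite inE H orbT. Qed.

Lemma count_le_sub (P Q : pred nat) s :
  (forall x, x \in s -> P x -> Q x) -> count P s <= count Q s.
Proof.
elim: s => //= x s IH H.
have h1 : (P x : nat) <= Q x.
  by case Px: (P x) => //; rewrite (H x (mem_head _ _) Px).
have h2 := IH (fun y Hy => H y (memt x Hy)).
lia.
Qed.

Lemma count_lt_sub (P Q : pred nat) s :
  (forall x, x \in s -> P x -> Q x) -> (exists2 x, x \in s & Q x && ~~ P x) ->
  count P s < count Q s.
Proof.
elim: s => [|x s IH] H [y Hy Hq] //=.
rewrite inE in Hy; case/orP: Hy => [/eqP Ey | Hy].
  subst y; case/andP: Hq => -> /negbTE ->.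
  have := count_le_sub (fun y Hy => H y (memt x Hy)); lia.
have h1 : (P x : nat) <= Q x.
  by case Px: (P x) => //; rewrite (H x (mem_head _ _) Px).
have h2 := IH (fun y Hy => H y (memt x Hy)) (ex_intro2 _ _ y Hy Hq).
lia.
Qed.

Section Rank.
Variables (T : eqType) (lt : rel T) (Hlt : sto lt) (n : nat) (p : nat -> T).
Definition rank i := count (fun j => lt (p j) (p i)) (iota 0 n).
Definition ranks := map rank (iota 0 n).

Lemma nth_ranks i : i < n -> nth 0 ranks i = rank i.
Proof. by move=> Hi; rewrite (nth_map 0) ?size_iota // nth_iota. Qed.

Lemma rank_lt_l i j : i < n -> j < n -> lt (p i) (p j) -> rank i < rank j.
Proof.
case: Hlt => Hirr Htr _ Hi Hj Hij.
apply: count_lt_sub.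
  by move=> k _ Hk; apply: Htr Hk Hij.
by exists i; rewrite ?mem_iota ?Hij ?Hirr.
Qed.

Lemma rank_lt i j : i < n -> j < n -> lt (p i) (p j) = (rank i < rank j).
Proof.
move=> Hi Hj; apply/idP/idP; first exact: rank_lt_l.
case: Hlt => Hirr Htr Htot.
move=> Hr; case: (eqVneq (p i) (p j)) => [E|Ne].
  have : rank i = rank j by rewrite /rank; apply: eq_count => k; rewrite E.
  lia.
case/orP: (Htot _ _ Ne) => // H.
have := rank_lt_l Hj Hi H; lia.
Qed.

Lemma rank_eq i j : i < n -> j < n -> rank i = rank j -> p i = p j.
Proof.
move=> Hi Hj E; case: (eqVneq (p i) (p j)) => // Ne.
case: Hlt => _ _ Htot.
case/orP: (Htot _ _ Ne) => H.
  have := rank_lt_l Hi Hj H; lia.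
have := rank_lt_l Hj Hi H; lia.
Qed.

Lemma rank_bound i : i < n -> rank i < n.
Proof.
move=> Hi; case: Hlt => Hirr _ _.
rewrite /rank -[X in _ < X](size_iota 0 n) -(count_predC (fun j => lt (p j) (p i))).
rewrite -[X in X < _]addn0 ltn_add2l -has_count.
by apply/hasP; exists i; rewrite ?mem_iota //= Hirr.
Qed.

Lemma ranks_uniq : (forall i j, i < n -> j < n -> p i = p j -> i = j) -> uniq ranks.
Proof.
move=> H; rewrite map_inj_in_uniq ?iota_uniq //.
move=> i j; rewrite !mem_iota /= => Hi Hj E.
by apply: H => //; apply: rank_eq.
Qed.

Lemma rk_ranks i j : i < n -> j < n -> rk ranks i j = lt (p i) (p j).
Proof. by move=> Hi Hj; rewrite /rk !nth_ranks // rank_lt. Qed.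
End Rank.

Definition pb (P : Prop) : bool := if excluded_middle_informative P then true else false.
Lemma pbP (P : Prop) : reflect P (pb P).
Proof. by rewrite /pb; case: excluded_middle_informative => H; constructor. Qed.

Definition p4 {T} (a b c d : T) := fun i => nth a [:: a; b; c; d] i.
Definition p3 {T} (a b c : T) := fun i => nth a [:: a; b; c] i.

Lemma uniq4P (T : eqType) (a b c d : T) :
  a <> b -> a <> c -> a <> d -> b <> c -> b <> d -> c <> d -> uniq [:: a; b; c; d].
Proof.
move=> /eqP ab /eqP ac /eqP ad /eqP bc /eqP bd /eqP cd.
by rewrite /= !inE !negb_or ab ac ad bc bd cd.
Qed.
Lemma uniq3P (T : eqType) (a b c : T) :
  a <> b -> a <> c -> b <> c -> uniq [:: a; b; c].
Proof. by move=> /eqP ab /eqP ac /eqP bc; rewrite /= !inE !negb_or ab ac bc. Qed.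
Lemma uniq3E (T : eqType) (a b c : T) :
  uniq [:: a; b; c] -> [/\ a <> b, a <> c & b <> c].
Proof.
rewrite /= !inE !negb_or => /andP[/andP[/eqP ? /eqP ?] /andP[/eqP ? _]]; done.
Qed.
Lemma notinP (T : eqType) (w : T) (s : seq T) : w \notin s -> forall u, u \in s -> w <> u.
Proof. by move=> H u Hu E; subst; rewrite Hu in H. Qed.

Section Sto.
Variables (T : eqType) (lt : rel T) (Hlt : sto lt).

Lemma sto_irr x : lt x x = false. Proof. by case: Hlt. Qed.
Lemma sto_tr x y z : lt x y -> lt y z -> lt x z. Proof. by case: Hlt => _ H _; apply: H. Qed.
Lemma sto_asym x y : lt x y -> lt y x = false.
Proof. by move=> H; apply/negbTE/negP => H'; have := sto_tr H H'; rewrite sto_irr. Qed.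
Lemma sto_tot x y : x != y -> ~~ lt x y -> lt y x.
Proof. by case: Hlt => _ _ H /H; case: (lt x y). Qed.

Lemma sto_flip : sto (fun x y => lt y x).
Proof.
split; first exact: sto_irr.
  by move=> x y z H1 H2; apply: sto_tr H2 H1.
by move=> x y N; case E: (lt y x) => //=; apply: sto_tot; rewrite ?E // eq_sym.
Qed.

Lemma Sb_rk n p i j k l : i < n -> j < n -> k < n -> l < n ->
  Sb (rk (ranks lt n p)) i j k l = Sb lt (p i) (p j) (p k) (p l).
Proof. by move=> *; rewrite /Sb /Bb !rk_ranks. Qed.
Lemma Cb_rk n p i j k : i < n -> j < n -> k < n ->
  Cb (rk (ranks lt n p)) i j k = Cb lt (p i) (p j) (p k).
Proof. by move=> *; rewrite /Cb !rk_ranks. Qed.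

Lemma Sb_rot (D : T -> bool) : (forall x y, lt x y -> D y -> D x) ->
  forall a b c d, Sb (crot D lt) a b c d = Sb lt a b c d.
Proof.
move=> HD a b c d.
pose p := p4 a b c d.
have Hb i : i < 4 -> rank lt 4 p i \in iota 0 4.
  by move=> Hi; rewrite mem_iota /= rank_bound.
have Hd x : D x \in [:: true; false] by case: (D x).
have := tup4P (tup4P checkR_ok (Hb 0 isT) (Hb 1 isT) (Hb 2 isT) (Hb 3 isT))
  (Hd a) (Hd b) (Hd c) (Hd d).
change [:: rank lt 4 p 0; rank lt 4 p 1; rank lt 4 p 2; rank lt 4 p 3] with (ranks lt 4 p).
change [:: D a; D b; D c; D d] with [:: D (p 0); D (p 1); D (p 2); D (p 3)].
have Hn i : i < 4 -> nth false [:: D (p 0); D (p 1); D (p 2); D (p 3)] i = D (p i).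
  by case: i => [|[|[|[|i]]]].
have -> : hypR (ranks lt 4 p) [:: D (p 0); D (p 1); D (p 2); D (p 3)].
  apply: allNP => i Hi; apply: allNP => j Hj.
  rewrite !Hn // rk_ranks //; apply/andP; split.
    by case E: (lt (p i) (p j) && D (p j)) => //; case/andP: E; apply: HD.
  rewrite !nth_ranks //; case: eqP => // E.
  by rewrite (rank_eq Hlt Hi Hj E).
rewrite /conclR /Sb /Bb /crot !rk_ranks //= => /eqP.
done.
Qed.

Lemma flipC x y z : uniq [:: x; y; z] -> Cb (fun a b => lt b a) x y z = ~~ Cb lt x y z.
Proof.
move=> U; pose p := p3 x y z.
have Hb i : i < 3 -> rank lt 3 p i \in iota 0 3.
  by move=> Hi; rewrite mem_iota /= rank_bound.
have := tup3P check0_ok (Hb 0 isT) (Hb 1 isT) (Hb 2 isT).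
change [:: rank lt 3 p 0; rank lt 3 p 1; rank lt 3 p 2] with (ranks lt 3 p).
rewrite ranks_uniq //.
  by rewrite /concl0 /Cb !rk_ranks //= => /eqP.
move=> i j Hi Hj; rewrite /p /p3 => E.
by apply/eqP; rewrite -(nth_uniq x _ _ U) ?E.
Qed.

Lemma Cb_nd x y z : ~~ uniq [:: x; y; z] -> Cb lt x y z = false.
Proof.
rewrite /= !inE !negb_or.
have K u v : lt u v && lt v u = false.
  by case E: (lt u v) => //=; rewrite sto_asym.
case: (eqVneq x y) => [<- _|nxy]; first by rewrite /Cb sto_irr /= andbF orbF K.
case: (eqVneq x z) => [<- _|nxz]; first by rewrite /Cb sto_irr /= andbF orbF K.
case: (eqVneq y z) => [<- _|nyz] //.
by rewrite /Cb sto_irr /= andbF /= K.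
Qed.
End Sto.

Section Two.
Variables (T : eqType) (lt lt2 : rel T) (H1 : sto lt) (H2 : sto lt2).



Lemma agree4 (HS : forall a b c d, Sb lt a b c d = Sb lt2 a b c d) a b c d :
  uniq [:: a; b; c; d] ->
  (Cb lt b c d == Cb lt2 b c d) = (Cb lt a b c == Cb lt2 a b c).
Proof.
move=> U; pose p := p4 a b c d.
have Hp i j : i < 4 -> j < 4 -> p i = p j -> i = j.
  by move=> Hi Hj E; apply/eqP; rewrite -(@nth_uniq T a [:: a; b; c; d] i j Hi Hj U); apply/eqP.
have Hb (R : rel T) (HR : sto R) i : i < 4 -> rank R 4 p i \in iota 0 4.
  by move=> Hi; rewrite mem_iota /= rank_bound.
have := tup4P check1_ok (Hb _ H1 0 isT) (Hb _ H1 1 isT) (Hb _ H1 2 isT) (Hb _ H1 3 isT).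
change [:: rank lt 4 p 0; rank lt 4 p 1; rank lt 4 p 2; rank lt 4 p 3] with (ranks lt 4 p).
rewrite ranks_uniq // => /tup4P /(_ _ _ _ _ (Hb _ H2 0 isT) (Hb _ H2 1 isT) (Hb _ H2 2 isT) (Hb _ H2 3 isT)).
change [:: rank lt2 4 p 0; rank lt2 4 p 1; rank lt2 4 p 2; rank lt2 4 p 3] with (ranks lt2 4 p).
rewrite ranks_uniq //.
have -> : hyp1 (ranks lt 4 p) (ranks lt2 4 p).
  apply: allNP => i Hi; apply: allNP => j Hj; apply: allNP => k Hk; apply: allNP => l Hl.
  by rewrite !Sb_rk // HS.
by rewrite /concl1 /agree !Cb_rk //= => /eqP.
Qed.

Lemma fact3 (HC : forall x y z, Cb lt x y z = Cb lt2 x y z) x y z :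
  lt x y -> lt y z ->
  (lt2 z y -> lt2 z x && lt2 x y) /\ ~~ (lt2 y x && lt2 x z).
Proof.
move=> Hxy Hyz; have Hxz := sto_tr H1 Hxy Hyz.
have U : uniq [:: x; y; z].
  apply: uniq3P => E; subst; by rewrite ?(sto_irr H1) in Hxy Hyz Hxz.
pose p := p3 x y z.
have Hp i j : i < 3 -> j < 3 -> p i = p j -> i = j.
  by move=> Hi Hj E; apply/eqP; rewrite -(@nth_uniq T x [:: x; y; z] i j Hi Hj U); apply/eqP.
have Hb (R : rel T) (HR : sto R) i : i < 3 -> rank R 3 p i \in iota 0 3.
  by move=> Hi; rewrite mem_iota /= rank_bound.
have := tup3P check3_ok (Hb _ H1 0 isT) (Hb _ H1 1 isT) (Hb _ H1 2 isT).
change [:: rank lt 3 p 0; rank lt 3 p 1; rank lt 3 p 2] with (ranks lt 3 p).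
rewrite ranks_uniq // => /tup3P /(_ _ _ _ (Hb _ H2 0 isT) (Hb _ H2 1 isT) (Hb _ H2 2 isT)).
change [:: rank lt2 3 p 0; rank lt2 3 p 1; rank lt2 3 p 2] with (ranks lt2 3 p).
rewrite ranks_uniq //.
have -> : hyp3 (ranks lt 3 p) (ranks lt2 3 p).
  apply: allNP => i Hi; apply: allNP => j Hj; apply: allNP => k Hk.
  by rewrite !Cb_rk // HC.
rewrite /concl3 !rk_ranks //= Hxy Hyz /= => /andP[A B]; split => //.
by move=> h; move: A; rewrite h.
Qed.

Lemma orient (HS : forall a b c d, Sb lt a b c d = Sb lt2 a b c d)
  (fresh : forall s : seq T, exists w, w \notin s) :
  (forall x y z, Cb lt x y z = Cb lt2 x y z) \/
  (forall x y z, Cb lt x y z = Cb (fun u v => lt2 v u) x y z).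
Proof.
have Hpath a b c x y z : uniq [:: a; b; c] -> uniq [:: x; y; z] ->
    (Cb lt a b c == Cb lt2 a b c) = (Cb lt x y z == Cb lt2 x y z).
  move=> /uniq3E [ab ac bc] /uniq3E [xy xz yz].
  have [w1 Hw1] := fresh [:: a; b; c; x; y; z].
  have [w2 Hw2] := fresh [:: w1; a; b; c; x; y; z].
  have [w3 Hw3] := fresh [:: w2; w1; a; b; c; x; y; z].
  have N1 := notinP Hw1; have N2 := notinP Hw2; have N3 := notinP Hw3.
  have n1a : w1 <> a by apply: N1; rewrite !inE eqxx ?orbT.
  have n1b : w1 <> b by apply: N1; rewrite !inE eqxx ?orbT.
  have n1c : w1 <> c by apply: N1; rewrite !inE eqxx ?orbT.
  have n1x : w1 <> x by apply: N1; rewrite !inE eqxx ?orbT.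
  have n1y : w1 <> y by apply: N1; rewrite !inE eqxx ?orbT.
  have n1z : w1 <> z by apply: N1; rewrite !inE eqxx ?orbT.
  have n21 : w2 <> w1 by apply: N2; rewrite !inE eqxx ?orbT.
  have n2a : w2 <> a by apply: N2; rewrite !inE eqxx ?orbT.
  have n2b : w2 <> b by apply: N2; rewrite !inE eqxx ?orbT.
  have n2c : w2 <> c by apply: N2; rewrite !inE eqxx ?orbT.
  have n2x : w2 <> x by apply: N2; rewrite !inE eqxx ?orbT.
  have n2y : w2 <> y by apply: N2; rewrite !inE eqxx ?orbT.
  have n2z : w2 <> z by apply: N2; rewrite !inE eqxx ?orbT.
  have n32 : w3 <> w2 by apply: N3; rewrite !inE eqxx ?orbT.
  have n31 : w3 <> w1 by apply: N3; rewrite !inE eqxx ?orbT.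
  have n3c : w3 <> c by apply: N3; rewrite !inE eqxx ?orbT.
  have n3x : w3 <> x by apply: N3; rewrite !inE eqxx ?orbT.
  have n3y : w3 <> y by apply: N3; rewrite !inE eqxx ?orbT.
  have n3z : w3 <> z by apply: N3; rewrite !inE eqxx ?orbT.
  rewrite -(agree4 HS (a:=a) (b:=b) (c:=c) (d:=w1)); last by apply: uniq4P; congruence.
  rewrite -(agree4 HS (a:=b) (b:=c) (c:=w1) (d:=w2)); last by apply: uniq4P; congruence.
  rewrite -(agree4 HS (a:=c) (b:=w1) (c:=w2) (d:=w3)); last by apply: uniq4P; congruence.
  rewrite -(agree4 HS (a:=w1) (b:=w2) (c:=w3) (d:=x)); last by apply: uniq4P; congruence.
  rewrite -(agree4 HS (a:=w2) (b:=w3) (c:=x) (d:=y)); last by apply: uniq4P; congruence.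
  rewrite -(agree4 HS (a:=w3) (b:=x) (c:=y) (d:=z)) //; by apply: uniq4P; congruence.
have [w1 Hw1] := fresh [::].
have [w2 Hw2] := fresh [:: w1].
have [w3 Hw3] := fresh [:: w2; w1].
have U : uniq [:: w1; w2; w3].
  apply: uniq3P.
  - by apply: nesym; apply: (notinP Hw2); rewrite inE.
  - by apply: nesym; apply: (notinP Hw3); rewrite !inE eqxx orbT.
  - by apply: nesym; apply: (notinP Hw3); rewrite !inE eqxx.
case E: (Cb lt w1 w2 w3 == Cb lt2 w1 w2 w3); [left|right] => x y z;
  (case Uxyz: (uniq [:: x; y; z]); last by rewrite (Cb_nd H1) ?Uxyz // ?(Cb_nd H2) ?(Cb_nd (sto_flip H2)) ?Uxyz).
- by apply/eqP; rewrite -(Hpath _ _ _ _ _ _ U Uxyz) E.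
- rewrite (flipC H2) //; move: E; rewrite (Hpath _ _ _ _ _ _ U Uxyz).
  by case: (Cb lt x y z); case: (Cb lt2 x y z).
Qed.

Lemma rotation (HC : forall x y z, Cb lt x y z = Cb lt2 x y z) :
  exists D : T -> bool, (forall x y, lt x y -> D y -> D x) /\
    forall p q, lt2 p q = crot D lt p q.
Proof.
pose D y := pb (exists x, lt y x && lt2 x y).
have F3 := fact3 HC.
have Hdown : forall x y, lt x y -> D y -> D x.
  move=> y' y H /pbP [x /andP [Hyx H2xy]]; apply/pbP; exists x.
  by rewrite (sto_tr H1 H Hyx) /=; case: (F3 _ _ _ H Hyx) => /(_ H2xy) /andP[].
have HDD p q : D q -> lt p q -> lt2 p q.
  move=> /pbP [w /andP [Hqw H2wq]] Hpq.
  by case: (F3 _ _ _ Hpq Hqw) => /(_ H2wq) /andP[].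
have HNN p q : ~~ D p -> lt p q -> lt2 p q.
  move=> ND Hpq; case E: (lt2 p q) => //.
  have Npq : p != q by apply/eqP => E'; subst; rewrite (sto_irr H1) in Hpq.
  have := sto_tot H2 Npq; rewrite E => /(_ isT) H2qp.
  by move: ND; have -> // : D p; apply/pbP; exists q; rewrite Hpq.
have HND p q : ~~ D p -> D q -> lt2 p q.
  move=> ND Dq; have := Dq; move=> /pbP [w /andP [Hqw H2wq]].
  have Npq : p != q by apply/eqP => E'; subst; rewrite Dq in ND.
  case Lpq: (lt p q); first by move: ND; rewrite (Hdown _ _ Lpq Dq).
  have Lqp : lt q p by apply: (sto_tot H1 Npq); rewrite Lpq.
  case E: (lt2 p q) => //.
  have H2qp : lt2 q p by apply: (sto_tot H2 Npq); rewrite E.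
  have H2wp := sto_tr H2 H2wq H2qp.
  have Nwp : w != p by apply/eqP => E'; subst; rewrite (sto_irr H2) in H2wp.
  case Lpw: (lt p w).
    by move: ND; have -> // : D p; apply/pbP; exists w; rewrite Lpw.
  have Lwp : lt w p by apply: (sto_tot H1 _); rewrite ?Lpw // eq_sym.
  by case: (F3 _ _ _ Hqw Lwp) => _; rewrite H2wq H2qp.
exists D; split => // p q; rewrite /crot.
case Dp: (D p); case Dq: (D q) => /=.
- case Lpq: (lt p q); first exact: HDD.
  case: (eqVneq p q) => [->|Npq]; first by rewrite (sto_irr H2).
  have Lqp : lt q p by apply: (sto_tot H1 Npq); rewrite Lpq.
  by rewrite (sto_asym H2 (HDD _ _ Dp Lqp)).
- by rewrite (sto_asym H2 (HND _ _ (negbT Dq) Dp)).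
- exact: HND (negbT Dp) Dq.
- case Lpq: (lt p q); first exact: HNN (negbT Dp) Lpq.
  case: (eqVneq p q) => [->|Npq]; first by rewrite (sto_irr H2).
  have Lqp : lt q p by apply: (sto_tot H1 Npq); rewrite Lpq.
  by rewrite (sto_asym H2 (HNN _ _ (negbT Dq) Lqp)).
Qed.
End Two.

Import Order.TTheory GRing.Theory Num.Theory.
Local Open Scope ring_scope.

Definition ltq : rel QZ := fun p q => (p.1 < q.1) || ((p.1 == q.1) && (p.2 < q.2)).

Lemma ltq_sto : sto ltq.
Proof.
split.
- by move=> [a b]; rewrite /ltq /= ltxx eqxx ltxx.
- move=> [a b] [c d] [e f]; rewrite /ltq /=.
  case/orP => [h1|/andP[/eqP E1 h1]]; case/orP => [h2|/andP[/eqP E2 h2]]; subst.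
  + by rewrite (lt_trans h1 h2).
  + by rewrite h1.
  + by rewrite h2.
  + by rewrite eqxx (lt_trans h1 h2) orbT.
- move=> [a b] [c d] N; rewrite /ltq /=.
  case: (ltgtP a c) => //= E; subst.
  rewrite ?eqxx /=; case: (ltgtP b d) => // E; subst.
  by rewrite eqxx in N.
Qed.

Lemma ltqP p q : reflect (qz_lt p q) (ltq p q).
Proof.
rewrite /qz_lt /ltq; apply: (iffP orP) => -[h|h]; [by left|right|by left|right].
  by case/andP: h => /eqP.
by case: h => -> ->; rewrite eqxx.
Qed.

Lemma BqzE a b c : Bqz a b c <-> Bb ltq a b c.
Proof.
rewrite /Bqz /Bb; split.
  by case=> -[/ltqP h1 /ltqP h2]; rewrite h1 h2 ?orbT.
by case/orP => /andP[/ltqP h1 /ltqP h2]; [left|right].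
Qed.

Lemma SqzE a b c d : Sqz a b c d <-> Sb ltq a b c d.
Proof.
rewrite /Sqz /Sb; split.
  case=> H1 H2; apply/andP; split; apply/orP.
    by case: H1 => /BqzE h; [left|right].
  by case: H2 => /BqzE h; [left|right].
case/andP => /orP H1 /orP H2; split.
  by case: H1 => /BqzE h; [left|right].
by case: H2 => /BqzE h; [left|right].
Qed.

Lemma Bb_flip (T : Type) (R : rel T) a b c : Bb (fun x y => R y x) a b c = Bb R a b c.
Proof. by rewrite /Bb orbC. Qed.
Lemma Sb_flip (T : Type) (R : rel T) a b c d : Sb (fun x y => R y x) a b c d = Sb R a b c d.
Proof. by rewrite /Sb !(Bb_flip R). Qed.

Definition rho (p : QZ) : QZ := (- p.1, - p.2).
Lemma rhoK : cancel rho rho.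
Proof. by move=> [a b]; rewrite /rho /= !opprK. Qed.
Lemma ltq_rho p q : ltq (rho p) (rho q) = ltq q p.
Proof. by rewrite /ltq /= !ltrN2 eqr_opp eq_sym. Qed.

Lemma fresh_qz (s : seq QZ) : exists w, w \notin s.
Proof.
have [r Hr] : exists r : rat, forall x, x \in s -> x.1 < r.
  elim: s => [|x s [r IH]]; first by exists 0.
  exists (Num.max r (x.1 + 1)) => y; rewrite inE => /orP[/eqP ->|Hy].
    by rewrite lt_max ltrDl ltr01 orbT.
  by rewrite lt_max IH.
exists (r, 0); apply/negP => /Hr /=; by rewrite ltxx.
Qed.

Lemma nobetween a b w : ltq (a, b) w -> ltq w (a, b + 1) -> False.
Proof.
case: w => c d; rewrite /ltq /=.
case/orP => [h1|/andP[/eqP E h1]]; case/orP => [h2|/andP[/eqP E2 h2]]; subst.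
- by have := lt_trans h1 h2; rewrite ltxx.
- by rewrite ltxx in h1.
- by rewrite ltxx in h2.
- lia.
Qed.

Lemma ltq_pair_neq (a b : rat) (x y : int) : ltq (a, x) (b, y) -> a != b -> a < b.
Proof. by rewrite /ltq /= => /orP[//|/andP[/eqP -> _]]; rewrite eqxx. Qed.

Section CaseA.
Variables (g g' : QZ -> QZ) (c1 : cancel g g') (c2 : cancel g' g) (D : QZ -> bool).
Hypothesis HD : forall x y, ltq x y -> D y -> D x.
Hypothesis H : forall p q, ltq (g p) (g q) = crot D ltq p q.

Lemma stepA r z : ~~ D (r, z) -> ~~ D (r, z - 1).
Proof.
move=> ND.
pose x := (r, z); pose v := ((g x).1, (g x).2 - 1); pose y := g' v.
have : crot D ltq y x by rewrite -H c2 /v /ltq /= eqxx /=; lia.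
rewrite /crot (negbTE ND) andbF /= => /andP[/eqP Dy Lyx].
apply/negP => Dz1.
case: (eqVneq y (r, z - 1)) => [Ey|Ny]; first by rewrite -Ey Dy in Dz1.
have : ltq y (r, z - 1).
  move: Lyx Ny; case: y Dy => y1 y2 _; rewrite /ltq /= => /orP[->//|/andP[/eqP E h]].
  subst; rewrite eqxx /= xpair_eqE eqxx /= => Ne.
  move/eqP: Ne; lia.
by move/HD/(_ Dz1); rewrite Dy.
Qed.

Lemma vertA r z z' : D (r, z) = D (r, z').
Proof.
have Hn : forall (n : nat) z, ~~ D (r, z + n%:Z) -> ~~ D (r, z).
  elim => [|n IH] z0; first by rewrite addr0.
  move=> Hz; apply: IH; have := stepA Hz.
  by have -> : z0 + n.+1%:Z - 1 = z0 + n%:Z by lia.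
have K : forall z z', D (r, z) -> D (r, z').
  move=> z1 z2 D1; apply/negP => /negP ND.
  case: (ltgtP z1 z2) => E.
  - have : z2 = z1 + (absz (z2 - z1))%:Z by lia.
    by move=> E2; rewrite E2 in ND; move: (Hn _ _ ND); rewrite D1.
  - have L : ltq (r, z2) (r, z1) by rewrite /ltq /= eqxx E ltxx.
    by rewrite (HD L D1) in ND.
  - by subst; rewrite D1 in ND.
by apply/idP/idP; apply: K.
Qed.

Lemma succA r z : g (r, z + 1) = ((g (r, z)).1, (g (r, z)).2 + 1).
Proof.
have Hxx' : ltq (g (r, z)) (g (r, z + 1)).
  by rewrite H /crot -(vertA r z (z + 1)) eqxx andNb /= /ltq /= eqxx /=; lia.
case Egx: (g (r, z)) Hxx' => [u1 u2] Hxx'.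
case: (eqVneq (g (r, z + 1)) (u1, u2 + 1)) => // N.
exfalso.
case L0: (ltq (g (r, z + 1)) (u1, u2 + 1)); first by apply: (nobetween Hxx' L0).
have L := sto_tot ltq_sto N (negbT L0).
have R1 : crot D ltq (r, z) (g' (u1, u2 + 1)) by rewrite -H c2 Egx /ltq /= eqxx /=; lia.
have R2 : crot D ltq (g' (u1, u2 + 1)) (r, z + 1) by rewrite -H c2.
move: R1 R2; rewrite /crot -(vertA r z (z + 1)).
case: (D (r, z)); case: (D (g' (u1, u2 + 1))) => //= L1 L2.
  by apply: (nobetween L1 L2).
by apply: (nobetween L1 L2).
Qed.
Lemma gformA r z : g (r, z) = ((g (r, 0)).1, (g (r, 0)).2 + z).
Proof.
have P : forall n : nat, g (r, n%:Z) = ((g (r, 0)).1, (g (r, 0)).2 + n%:Z).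
  elim => [|n IH]; first by rewrite addr0; case: (g (r, 0)).
  have -> : (n.+1)%:Z = n%:Z + 1 by lia.
  by rewrite succA IH /= addrA.
have N : forall n : nat, g (r, - n%:Z) = ((g (r, 0)).1, (g (r, 0)).2 - n%:Z).
  elim => [|n IH]; first by rewrite oppr0 subr0; case: (g (r, 0)).
  have E := succA r (- (n.+1)%:Z).
  have E0 : - (n.+1)%:Z + 1 = - n%:Z by lia.
  rewrite E0 IH in E.
  move: E; case: (g (r, - (n.+1)%:Z)) => a b /= [E1 E2].
  rewrite E1; congr pair; lia.
case: z => n; first exact: P.
by rewrite NegzE; apply: N.
Qed.

Lemma caseA_main : exists h, initiates g h /\ positive_on_verticals g /\ rotation_type h.
Proof.
pose h r := (g (r, 0)).1; pose c r := (g (r, 0)).2.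
have gf r z : g (r, z) = (h r, c r + z) by rewrite gformA.
have hinj : injective h.
  move=> a b E.
  have : g (b, c a - c b) = g (a, 0) by rewrite !gf E; congr pair; lia.
  by move/(can_inj c1) => [].
exists h; split; [|split].
- move=> r; split => [z|z']; first by rewrite gf.
  by exists (z' - c r); rewrite gf; congr pair; lia.
- by move=> r z z' L; rewrite !gf /=; lia.
- split.
  + exists (fun s => (g' (s, 0)).1).
    * move=> r /=.
      have E : g (r, - c r) = (h r, 0) by rewrite gf; congr pair; lia.
      by rewrite -E c1.
    * move=> s /=; case E: (g' (s, 0)) => [r z] /=.
      by have := c2 (s, 0); rewrite E gf => -[-> _].
  + exists (fun a => D (a, 0)).
    have Hh a b : a != b -> crot D ltq (a, 0) (b, 0) -> h a < h b.
      move=> Nab; rewrite -H !gf => L; apply: (ltq_pair_neq L).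
      by apply/eqP => /hinj E; rewrite E eqxx in Nab.
    split; [|split; [|split]].
    * move=> a b Db Lab; apply: (HD _ Db).
      by rewrite /ltq /= Lab.
    * move=> a b Da Db Lab; apply: Hh; first by rewrite lt_eqF.
      by rewrite /crot Da Db /= /ltq /= Lab.
    * move=> a b /negP/negbTE Da /negP/negbTE Db Lab; apply: Hh; first by rewrite lt_eqF.
      by rewrite /crot Da Db /= /ltq /= Lab.
    * move=> a b Da /negP/negbTE Db; apply: Hh.
        by apply/eqP => E; subst; rewrite Da in Db.
      by rewrite /crot Da Db.
Qed.
End CaseA.

Lemma caseB (g g' : QZ -> QZ) (c1 : cancel g g') (c2 : cancel g' g) (D : QZ -> bool)
  (HD : forall x y, ltq x y -> D y -> D x)
  (H : forall p q, ltq (g q) (g p) = crot D ltq p q) :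
  exists h, initiates g h /\ negative_on_verticals g /\ reflection_type h.
Proof.
have c1' : cancel (rho \o g) (g' \o rho) by move=> p /=; rewrite rhoK c1.
have c2' : cancel (g' \o rho) (rho \o g) by move=> p /=; rewrite c2 rhoK.
have H' : forall p q, ltq ((rho \o g) p) ((rho \o g) q) = crot D ltq p q.
  by move=> p q /=; rewrite ltq_rho H.
have [h [Hi [Hp [[hi hK1 hK2] [I1 [Hc [m1 [m2 m3]]]]]]]] := caseA_main c1' c2' HD H'.
exists (fun r => - h r); split; [|split].
- move=> r; case: (Hi r) => Ha Hb; split => [z|z'].
    by rewrite -(Ha z) /= opprK.
  case: (Hb (- z')) => z E; exists z.
  have E' : rho (g (r, z)) = (h r, - z') by exact: E.
  by rewrite -[g (r, z)]rhoK E' /rho /= opprK.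
- move=> r z z' L; have := Hp r z z' L; by rewrite /= ltrN2.
- split.
  + exists (fun s => hi (- s)) => [r|s] /=; first by rewrite opprK hK1.
    by rewrite hK2 opprK.
  + exists I1; split => //; split; [|split].
    * by move=> a b Ia Ib L; rewrite ltrN2; apply: m1.
    * by move=> a b Ia Ib L; rewrite ltrN2; apply: m2.
    * by move=> a b Ia Ib; rewrite ltrN2; apply: m3.
Qed.

Lemma convA (g : QZ -> QZ) (h : rat -> rat) :
  initiates g h -> positive_on_verticals g -> rotation_type h -> preserves4 Sqz g.
Proof.
move=> Hi Hp [[hi hK1 hK2] [I1 [Hc [m1 [m2 m3]]]]].
have hinj : injective h := can_inj hK1.
pose D (p : QZ) := pb (I1 p.1).
have HD : forall x y, ltq x y -> D y -> D x.
  move=> [a b] [c d]; rewrite /ltq /D /= => /orP[L|/andP[/eqP -> _]] //.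
  move/pbP => Ic; apply/pbP; exact: Hc Ic L.
have gf r z : g (r, z) = (h r, (g (r, z)).2).
  by rewrite -(proj1 (Hi r) z); case: (g (r, z)).
have mono r z z' : ((g (r, z)).2 < (g (r, z')).2) = (z < z').
  case: (ltgtP z z') => [L|L|->]; first exact: Hp.
    by rewrite lt_gtF // Hp.
  by rewrite ltxx.
have key : forall p q, ltq (g p) (g q) = crot D ltq p q.
  move=> [r z] [r' z']; rewrite (gf r z) (gf r' z') /crot /D /ltq /=.
  case: (eqVneq r r') => [<-|Nr].
    by rewrite !ltxx !eqxx andNb /= mono.
  have Nh : h r != h r' by apply/eqP => /hinj E; rewrite E eqxx in Nr.
  rewrite (negbTE Nh) /= ?orbF.
  case: (pbP (I1 r)) => Ir; case: (pbP (I1 r')) => Ir' /=.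
  - case: (ltgtP r r') => L; first exact: m1.
      by rewrite lt_gtF //; apply: m1.
    by rewrite L eqxx in Nr.
  - by rewrite lt_gtF //; apply: m3.
  - by apply: m3.
  - case: (ltgtP r r') => L; first exact: m2.
      by rewrite lt_gtF //; apply: m2.
    by rewrite L eqxx in Nr.
move=> a b c d; rewrite !SqzE.
have E : (fun p q => ltq (g p) (g q)) = crot D ltq.
  by do 2 (apply: functional_extensionality => ?); apply: key.
have -> : Sb ltq (g a) (g b) (g c) (g d) = Sb (crot D ltq) a b c d by rewrite -E.
by rewrite (Sb_rot ltq_sto HD).
Qed.

Lemma Sb_rho a b c d : Sb ltq (rho a) (rho b) (rho c) (rho d) = Sb ltq a b c d.
Proof. by rewrite -[RHS](Sb_flip ltq) /Sb /Bb !ltq_rho. Qed.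

Lemma convB (g : QZ -> QZ) (h : rat -> rat) :
  initiates g h -> negative_on_verticals g -> reflection_type h -> preserves4 Sqz g.
Proof.
move=> Hi Hn [[hi hK1 hK2] [I1 [Hc [m1 [m2 m3]]]]].
have : preserves4 Sqz (rho \o g).
  apply: (convA (h := fun r => - h r)).
  - move=> r; case: (Hi r) => Ha Hb; split => [z|z'] /=; first by rewrite Ha.
    case: (Hb (- z')) => z E; exists z; by rewrite E /rho /= opprK.
  - by move=> r z z' L /=; rewrite ltrN2; apply: Hn.
  - split.
    + exists (fun s => hi (- s)) => [r|s] /=; first by rewrite opprK hK1.
      by rewrite hK2 opprK.
    + exists I1; split => //; split; [|split].
      * by move=> x y Ix Iy L; rewrite ltrN2; apply: m1.
      * by move=> x y Ix Iy L; rewrite ltrN2; apply: m2.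
      * by move=> x y Ix Iy; rewrite ltrN2; apply: m3.
move=> HP a b c d; rewrite (HP a b c d) !SqzE /=.
by rewrite Sb_rho.
Qed.

Theorem mainTheorem10 (g : QZ -> QZ) :
  bijective g ->
  (preserves4 Sqz g <->
   ((exists h : rat -> rat,
       initiates g h /\ positive_on_verticals g /\ rotation_type h) \/
    (exists h : rat -> rat,
       initiates g h /\ negative_on_verticals g /\ reflection_type h))).
Proof.
case=> g' c1 c2; split.
- move=> Hp.
  pose lt2 := fun p q => ltq (g p) (g q).
  have S2 : sto lt2.
    split.
    + by move=> x; rewrite /lt2 (sto_irr ltq_sto).
    + by move=> x y z; rewrite /lt2; apply: (sto_tr ltq_sto).
    + move=> x y N; rewrite /lt2; case: ltq_sto => _ _ T; apply: T.
      by apply: contra N => /eqP E; apply/eqP; rewrite -[x]c1 E c1.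
  have HS : forall a b c d, Sb ltq a b c d = Sb lt2 a b c d.
    move=> a b c d; change (Sb ltq a b c d = Sb ltq (g a) (g b) (g c) (g d)).
    apply/idP/idP => H.
      by have := proj1 (Hp a b c d) (proj2 (SqzE _ _ _ _) H); move/SqzE.
    by apply/SqzE; apply/(Hp a b c d); apply/SqzE.
  case: (orient ltq_sto S2 HS fresh_qz) => HC.
  + have [D [HD H]] := rotation ltq_sto S2 HC.
    by left; apply: (caseA_main c1 c2 HD H).
  + have [D [HD H]] := rotation ltq_sto (sto_flip S2) HC.
    by right; apply: (caseB c1 c2 HD H).
- case=> [[h [Hi [Hp Hr]]]|[h [Hi [Hn Hr]]]].
    exact: (convA Hi Hp Hr).
  exact: (convB Hi Hn Hr).
Qed.
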